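(* Assume the setting described in the context and let $\mathscr K\subseteq\mathbb R^{\mathfrak d}$ be compact. Then there exists $\mathscr L\in\mathbb R$ such that for all $\theta,\vartheta\in\mathscr K$ it holds that $$|\mathcal L_\infty(\theta)-\mathcal L_\infty(\vartheta)|+\sup_{x\in[a,b]^{\ell_0}}\|\mathcal N^{L,\theta}_\infty(x)-\mathcal N^{L,\vartheta}_\infty(x)\|\le\mathscr L\|\theta-\vartheta\|.$$
   Context: Setting. Let $L,\mathfrak d\in\mathbb N=\{1,2,\dots\}$, $(\ell_k)_{k\in\mathbb N_0}\subseteq\mathbb N$, $a\in\mathbb R$, $b\in(a,\infty)$ with $\mathfrak d=\sum_{k=1}^L\ell_k(\ell_{k-1}+1)$; let $\mathbf d_k=\sum_{h=1}^k\ell_h(\ell_{h-1}+1)$ for $k\in\mathbb N_0$. For $\theta=(\theta_1,\dots,\theta_{\mathfrak d})\in\mathbb R^{\mathfrak d}$, $k\in\{1,\dots,L\}$, $i\in\{1,\dots,\ell_k\}$, $j\in\{1,\dots,\ell_{k-1}\}$ let $\mathfrak w^{k,\theta}_{i,j}=\theta_{(i-1)\ell_{k-1}+j+\mathbf d_{k-1}}$ and $\mathfrak b^{k,\theta}_i=\theta_{\ell_k\ell_{k-1}+i+\mathbf d_{k-1}}$, let $\mathfrak w^{k,\theta}=(\mathfrak w^{k,\theta}_{i,j})_{i,j}\in\mathbb R^{\ell_k\times\ell_{k-1}}$, $\mathfrak b^{k,\theta}=(\mathfrak b^{k,\theta}_1,\dots,\mathfrak b^{k,\theta}_{\ell_k})\in\mathbb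 R^{\ell_k}$, and $\mathcal A^\theta_k(x)=\mathfrak b^{k,\theta}+\mathfrak w^{k,\theta}x$. Let $\mathfrak M_\infty(x_1,\dots,x_n)=(\max\{x_1,0\},\dots,\max\{x_n,0\})$ and $\|\cdot\|$ the Euclidean norm. Define $\mathcal N^{k,\theta}_\infty\colon\mathbb R^{\ell_0}\to\mathbb R^{\ell_k}$, $k\in\{1,\dots,L\}$, by $\mathcal N^{1,\theta}_\infty=\mathcal A^\theta_1$ and $\mathcal N^{k+1,\theta}_\infty(x)=\mathcal A^\theta_{k+1}(\mathfrak M_\infty(\mathcal N^{k,\theta}_\infty(x)))$. Let $\mu$ be a measure on the Borel $\sigma$-algebra of $[a,b]^{\ell_0}$ with $\mu([a,b]^{\ell_0})\in\mathbb R$, let $f\colon[a,b]^{\ell_0}\to\mathbb R^{\ell_L}$ be measurable, and let $\mathcal L_\infty\colon\mathbb R^{\mathfrak d}\to\mathbb R$, $\mathcal L_\infty(\theta)=\int_{[a,b]^{\ell_0}}\|\mathcal N^{L,\theta}_\infty(x)-f(x)\|^2\,\mu(dx)$ (these integrals are real numbers as part of the setting). *)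

(* Defs.v *)
From HB Require Import structures.
From mathcomp Require Import all_boot all_order all_algebra.
From mathcomp Require Import all_classical all_reals all_analysis.

Import Order.TTheory GRing.Theory Num.Theory.
Import numFieldNormedType.Exports.
Local Open Scope classical_set_scope.
Local Open Scope ring_scope.

Section ANN.
Variable R : realType.

Definition euclid (n : nat) (v : 'I_n -> R) : R := Num.sqrt (\sum_(i < n) v i ^+ 2).

Definition dpar (l : nat -> nat) (k : nat) : nat :=
  (\sum_(1 <= h < k.+1) l h * (l h.-1 + 1))%N.

(* theta_n for a 0-indexed position n (0 if out of range, never used) *)
Definition th_at (dd : nat) (th : 'rV[R]_dd) (n : nat) : R :=
  if @insub nat (fun m => m < dd)%N 'I_dd n is Some i then th 0 i else 0.

(* weights w^{k,theta}_{i,j} and biases b^{k,theta}_i, with 0-indexed i, j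
   (paper: theta_{(i-1) l_{k-1} + j + d_{k-1}}, theta_{l_k l_{k-1} + i + d_{k-1}}
    with 1-indexed i, j) *)
Definition wgt (l : nat -> nat) (dd : nat) (th : 'rV[R]_dd) (k : nat)
  (i : 'I_(l k)) (j : 'I_(l k.-1)) : R :=
  th_at dd th (i * l k.-1 + j + dpar l k.-1)%N.
Definition bias (l : nat -> nat) (dd : nat) (th : 'rV[R]_dd) (k : nat)
  (i : 'I_(l k)) : R :=
  th_at dd th (l k * l k.-1 + i + dpar l k.-1)%N.

Definition act (k : nat) (y : R) : R := if k == 0%N then y else Num.max y 0.

Fixpoint realization (l : nat -> nat) (dd : nat) (th : 'rV[R]_dd) (k : nat)
  : (l 0%N).-tuple R -> 'I_(l k) -> R :=
  match k return (l 0%N).-tuple R -> 'I_(l k) -> R with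
  | 0%N => fun x i => tnth x i
  | k'.+1 => fun x i =>
      bias l dd th k'.+1 i + \sum_(j < l k') wgt l dd th k'.+1 i j * act k' (realization l dd th k' x j)
  end.

Definition cube (n : nat) (a b : R) : set (n.-tuple R) :=
  [set x | forall i : 'I_n, a <= tnth x i <= b].

Definition sqerr (l : nat -> nat) (L dd : nat) (th : 'rV[R]_dd)
  (f : (l 0%N).-tuple R -> (l L).-tuple R) (x : (l 0%N).-tuple R) : \bar R :=
  ((euclid (l L) (fun i => realization l dd th L x i - tnth (f x) i)) ^+ 2)%:E.

Definition loss (l : nat -> nat) (L dd : nat) (a b : R)
  (mu : {measure set ((l 0%N).-tuple R) -> \bar R})
  (f : (l 0%N).-tuple R -> (l L).-tuple R) (th : 'rV[R]_dd) : R :=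
  fine (\int[mu]_(x in cube (l 0%N) a b) sqerr l L dd th f x).

End ANN.

(* Main.v *)
Require Import Defs.
From HB Require Import structures.
From mathcomp Require Import all_boot all_order all_algebra.
From mathcomp Require Import all_classical all_reals all_analysis.
From mathcomp Require Import ring lra.
Import Order.TTheory GRing.Theory Num.Theory.
Import numFieldNormedType.Exports.
Local Open Scope classical_set_scope.
Local Open Scope ring_scope.

Section Lip.
Variable R : realType.

Lemma sum_bound n (F : 'I_n -> R) c : (forall j, `|F j| <= c) -> `|\sum_(j < n) F j| <= n%:R * c.
Proof.
move=> H; apply: le_trans (ler_norm_sum _ _ _) _.
apply: le_trans (ler_sum _ (fun j _ => H j)) _.
by rewrite sumr_const card_ord mulr_natl.
Qed.

Lemma coord_le_euclid n (v : 'I_n -> R) i : `|v i| <= euclid R n v.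
Proof.
rewrite /euclid -sqrtr_sqr ler_sqrt; last by apply: sumr_ge0 => j _; exact: sqr_ge0.
rewrite (bigD1 i) //= lerDl. by apply: sumr_ge0 => j _; exact: sqr_ge0.
Qed.

Lemma th_at_diff dd (th vth : 'rV[R]_dd) n :
  `|th_at R dd th n - th_at R dd vth n| <= euclid R dd (fun i => th 0 i - vth 0 i).
Proof.
rewrite /th_at; case: insubP => [i _ _|_].
  exact: (coord_le_euclid _ (fun i => th 0 i - vth 0 i) i).
by rewrite subr0 normr0 /euclid sqrtr_ge0.
Qed.

Lemma th_at_bound dd (th : 'rV[R]_dd) M n : 0 <= M -> (forall j, `|th 0 j| <= M) ->
  `|th_at R dd th n| <= M.
Proof. by move=> M0 H; rewrite /th_at; case: insubP => [i _ _|_]; rewrite ?normr0. Qed.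

Lemma act_neg k (y : R) : k != 0%N -> y < 0 -> act R k y = 0.
Proof. by move=> /negbTE hk hy; rewrite /act hk max_r // ltW. Qed.
Lemma act_pos k (y : R) : 0 <= y -> act R k y = y.
Proof. by move=> hy; rewrite /act; case: ifP => // _; rewrite max_l. Qed.

Lemma act_le k y : `|act R k y| <= `|y|.
Proof.
case: (eqVneq k 0%N) => hk; first by rewrite /act hk.
case: (ltP y 0) => hy; first by rewrite act_neg // normr0.
by rewrite act_pos.
Qed.

Lemma act_lip k y z : `|act R k y - act R k z| <= `|y - z|.
Proof.
case: (eqVneq k 0%N) => hk; first by rewrite /act hk.
case: (ltP y 0) => hy; case: (ltP z 0) => hz.
- by rewrite !act_neg // subrr normr0.
- rewrite (act_neg _ _ hk hy) (act_pos _ _ hz) sub0r normrN (ger0_norm hz) ler0_norm; clear hk; lra.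
- rewrite (act_pos _ _ hy) (act_neg _ _ hk hz) subr0 (ger0_norm hy) ger0_norm; clear hk; lra.
- by rewrite !act_pos.
Qed.

Variables (l : nat -> nat) (dd : nat) (a b : R).

Definition delta (th vth : 'rV[R]_dd) := euclid R dd (fun i => th 0 i - vth 0 i).

Lemma delta_ge0 th vth : 0 <= delta th vth.
Proof. exact: sqrtr_ge0. Qed.

Lemma real_lip (M : R) : 0 <= M -> forall k : nat, exists B C : R, 0 <= B /\ 0 <= C /\
  forall (th vth : 'rV[R]_dd) (x : (l 0%N).-tuple R), (forall j, `|th 0 j| <= M) -> (forall j, `|vth 0 j| <= M) ->
  cube R (l 0%N) a b x -> forall i : 'I_(l k),
  `|realization R l dd th k x i| <= B /\
  `|realization R l dd th k x i - realization R l dd vth k x i| <= C * delta th vth.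
Proof.
move=> M0; elim=> [|k [B [C [B0 [C0 IH]]]]].
  exists (`|a| + `|b|), 0; split; first by rewrite addr_ge0.
  split=> // th vth x _ _ cx i; split; last by rewrite /= subrr normr0 mul0r.
  move: (cx i) => /andP [h1 h2] /=.
  have h3 := ler_norm b.
  have h4 : - `|a| <= a by rewrite lerNl -normrN ler_norm.
  rewrite ler_norml; apply/andP; split.
  - have := normr_ge0 b; lra.
  - have := normr_ge0 a; lra.
exists (M + (l k)%:R * (M * B)), (1 + (l k)%:R * (B + M * C)).
split; first by rewrite addr_ge0 // mulr_ge0 // mulr_ge0.
split; first by rewrite addr_ge0 // mulr_ge0 // addr_ge0 // mulr_ge0.
move=> th vth x hth hvth cx i /=.
split.
  apply: le_trans (ler_normD _ _) _; apply: lerD; first exact: th_at_bound.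
  apply: sum_bound => j; rewrite normrM; apply: ler_pM => //.
    exact: th_at_bound.
  apply: le_trans (act_le _ _) _; exact: (IH th vth x hth hvth cx j).1.
rewrite opprD addrACA -sumrB.
apply: le_trans (ler_normD _ _) _.
apply: (@le_trans _ _ (delta th vth + (l k)%:R * (delta th vth * B + M * (C * delta th vth)))).
  apply: lerD; first exact: th_at_diff.
  apply: sum_bound => j.
  rewrite /wgt /=.
  set w := th_at R dd th _; set w' := th_at R dd vth _.
  set u := act R k _; set u' := act R k _.
  have -> : w * u - w' * u' = (w - w') * u + w' * (u - u') by ring.
  apply: le_trans (ler_normD _ _) _; apply: lerD; rewrite normrM; apply: ler_pM => //.
  - exact: th_at_diff.
  - apply: le_trans (act_le _ _) _; exact: (IH th vth x hth hvth cx j).1.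
  - exact: th_at_bound.
  - apply: le_trans (act_lip _ _ _) _; exact: (IH th vth x hth hvth cx j).2.
by rewrite le_eqVlt; apply/orP; left; apply/eqP; ring.
Qed.

Lemma euclid_sq n (v : 'I_n -> R) : euclid R n v ^+ 2 = \sum_(i < n) v i ^+ 2.
Proof. by rewrite /euclid sqr_sqrtr //; apply: sumr_ge0 => i _; exact: sqr_ge0. Qed.

Lemma euclid_le n (v : 'I_n -> R) (c : R) : 0 <= c -> (forall i, `|v i| <= c) ->
  euclid R n v <= n%:R * c.
Proof.
move=> c0 H.
have nc0 : 0 <= n%:R * c by rewrite mulr_ge0.
rewrite -(ger0_norm nc0) -sqrtr_sqr /euclid ler_sqrt; last exact: sqr_ge0.
apply: (@le_trans _ _ (\sum_(i < n) c ^+ 2)).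
  apply: ler_sum => i _.
  have := H i; rewrite ler_norml => /andP [h1 h2]; nra.
rewrite sumr_const card_ord exprMn -[c ^+ 2 *+ n]mulr_natl.
apply: ler_wpM2r; first exact: sqr_ge0.
rewrite -natrX ler_nat; case: n {v H nc0} => // n.
by rewrite expnS leq_pmulr // expn_gt0.
Qed.

Lemma term_ineq (u v f c B : R) : `|u| <= B -> `|v| <= B -> `|u - v| <= c -> 0 <= c ->
  (u - f) ^+ 2 <= (v - f) ^+ 2 + c * (2 * B + 1) + c * (0 - f) ^+ 2.
Proof.
move=> hu hv huv c0.
have e : (u - f) ^+ 2 = (v - f) ^+ 2 + (u - v) * (u + v - 2 * f) by ring.
rewrite e -[_ + c * _ + _]addrA lerD2l -mulrDr.
apply: (le_trans (ler_norm _)); rewrite normrM.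
apply: ler_pM => //.
have hf : (0 - f) ^+ 2 = `|f| ^+ 2 by rewrite sub0r sqrrN -normrX ger0_norm // sqr_ge0.
rewrite hf.
have h2 : `|u + v - 2 * f| <= `|u| + `|v| + 2 * `|f|.
  apply: (le_trans (ler_normD _ _)); rewrite normrN normrM ger0_norm //.
  by rewrite lerD2r ler_normD.
have h3 : 2 * `|f| <= 1 + `|f| ^+ 2 by have := sqr_ge0 (`|f| - 1); nra.
clear e hf; lra.
Qed.

End Lip.
Arguments delta {R dd}.

Section Meas.
Variable R : realType.
Variables (l : nat -> nat) (dd : nat) (a b : R).

Lemma cube_meas n : measurable (cube R n a b).
Proof.
have -> : cube R n a b = \bigcap_(i in [set: 'I_n]) ((fun x : n.-tuple R => tnth x i) @^-1` `[a, b]%classic).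
  apply/seteqP; split => x /=.
    by move=> H i _; rewrite /= in_itv /=; exact: H.
  by move=> H i; have := H i I; rewrite /= in_itv.
apply: fin_bigcap_measurable; first exact: finite_finset.
move=> i _; rewrite -[X in measurable X]setTI.
exact: (measurable_tnth i measurableT (measurable_itv _)).
Qed.

Lemma real_meas (th : 'rV[R]_dd) k (i : 'I_(l k)) :
  measurable_fun setT (fun x => realization R l dd th k x i).
Proof.
move: i; elim: k => [|k IH] i /=; first exact: measurable_tnth.
apply: measurable_realfun.measurable_funD; first exact: measurable_cst.
apply: measurable_sum => j.
apply: measurable_realfun.measurable_funM; first exact: measurable_cst.
rewrite /act; case: (k == 0%N); first exact: IH.
apply: measurable_realfun.measurable_maxr; first exact: IH.
exact: measurable_cst.
Qed.

Lemma th_at0 n : th_at R dd 0 n = 0.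
Proof. by rewrite /th_at; case: insubP => // i _ _; rewrite mxE. Qed.

Lemma real_zero k x (i : 'I_(l k)) : (0 < k)%N -> realization R l dd 0 k x i = 0.
Proof.
case: k i => // k i _ /=.
rewrite /bias th_at0 add0r big1 // => j _.
by rewrite /wgt th_at0 mul0r.
Qed.

Lemma delta_sym (th vth : 'rV[R]_dd) : delta th vth = delta vth th.
Proof.
rewrite /delta /euclid; congr Num.sqrt; apply: eq_bigr => i _.
by rewrite -sqrrN opprB.
Qed.

End Meas.

Lemma cbound (R : realType) n (K : set 'rV[R]_n) : compact K ->
  exists M, 0 <= M /\ forall x i, K x -> `|x 0 i| <= M.
Proof.
move=> /compact_bounded [M0 [_ HM]].
exists (`|M0| + 1); split => // .
move=> x i Kx.
have e : `|x 0 i| <= mx_norm x.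
  rewrite mx_normrE (bigD1 (0, i)) //=. by rewrite le_max lexx.
apply: (le_trans e).
apply: (HM (`|M0| + 1)) => //.
rewrite (le_lt_trans (ler_norm _)) // ltrDl //.
Qed.

Theorem lemma2p10 (R : realType) (L : nat) (hL : (0 < L)%N)
  (l : nat -> nat) (hl : forall k, (0 < l k)%N)
  (dd : nat) (hdd : dd = dpar l L)
  (a b : R) (hab : a < b)
  (mu : {measure set ((l 0%N).-tuple R) -> \bar R})
  (hmu : (mu (cube R (l 0%N) a b) < +oo)%E)
  (f : (l 0%N).-tuple R -> (l L).-tuple R)
  (hf : measurable_fun (cube R (l 0%N) a b) f)
  (hfin : forall th : 'rV[R]_dd,
     (\int[mu]_(x in cube R (l 0%N) a b) sqerr R l L dd th f x)%E \is a fin_num)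
  (K : set 'rV[R]_dd) (hK : compact K) :
  exists LL : R, forall th vth : 'rV[R]_dd, K th -> K vth ->
    ((`|loss R l L dd a b mu f th - loss R l L dd a b mu f vth|)%:E
     + ereal_sup [set (euclid R (l L) (fun i => realization R l dd th L x i
                                      - realization R l dd vth L x i))%:E
                 | x in cube R (l 0%N) a b]
     <= (LL * euclid R dd (fun i => th 0 i - vth 0 i))%:E)%E.
Proof.
have mD : measurable (cube R (l 0%N) a b) by exact: cube_meas.
set D := cube R (l 0%N) a b in mD hmu hf hfin *.
have [M [M0 HM]] := cbound R dd K hK.
have [B [C [B0 [C0 HBC]]]] := @real_lip R l dd a b M M0 L.
pose Gr (th : 'rV[R]_dd) x := \sum_(i < l L) (realization R l dd th L x i - tnth (f x) i) ^+ 2.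
have sqE th x : sqerr R l L dd th f x = (Gr th x)%:E by rewrite /sqerr euclid_sq.
have mG th : measurable_fun D (Gr th).
  apply: measurable_sum => i.
  apply: measurable_realfun.measurable_funX.
  apply: measurable_realfun.measurable_funB.
    exact: (measurable_funS measurableT (@subsetT _ D) (real_meas R l dd th L i)).
  exact: (measurableT_comp (measurable_tnth i) hf).
have Gr0 th x : 0 <= Gr th x by apply: sumr_ge0 => i _; exact: sqr_ge0.
have intE th : (\int[mu]_(x in D) sqerr R l L dd th f x = \int[mu]_(x in D) (Gr th x)%:E)%E.
  by apply: eq_integral => x _; rewrite sqE.
pose I th := fine (\int[mu]_(x in D) (Gr th x)%:E)%E.
have IE th : (\int[mu]_(x in D) (Gr th x)%:E)%E = (I th)%:E.
  by rewrite fineK // -intE.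
have lossE th : loss R l L dd a b mu f th = I th by rewrite /loss intE.
pose m := fine (mu D).
have mE : mu D = m%:E.
  rewrite fineK // ge0_fin_numE //; exact: measure_ge0.
pose E := (l L)%:R * (2 * B + 1).
have key th vth x : K th -> K vth -> D x ->
    Gr th x <= Gr vth x + C * delta th vth * E + C * delta th vth * Gr 0 x.
  move=> Kth Kvth Dx.
  have hb := HBC th vth x (fun j => HM th j Kth) (fun j => HM vth j Kvth) Dx.
  have hb' := HBC vth th x (fun j => HM vth j Kvth) (fun j => HM th j Kth) Dx.
  have -> : Gr 0 x = \sum_(i < l L) (0 - tnth (f x) i) ^+ 2.
    by apply: eq_bigr => i _; rewrite real_zero.
  rewrite /Gr /E mulr_sumr mulrCA.
  have -> : (l L)%:R * (C * delta th vth * (2 * B + 1)) =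
    \sum_(i < l L) (C * delta th vth * (2 * B + 1)) by rewrite sumr_const card_ord mulr_natl.
  rewrite -!big_split /=.
  apply: ler_sum => i _.
  apply: term_ineq.
  - exact: (hb i).1.
  - exact: (hb' i).1.
  - exact: (hb i).2.
  - by rewrite mulr_ge0 // delta_ge0.
have side th vth : K th -> K vth ->
    I th <= I vth + C * delta th vth * (E * m + I 0).
  move=> Kth Kvth.
  have cd0 : 0 <= C * delta th vth by rewrite mulr_ge0 // delta_ge0.
  have E0 : 0 <= E by rewrite mulr_ge0 // addr_ge0 // mulr_ge0.
  rewrite -lee_fin -IE.
  apply: (@le_trans _ _ (\int[mu]_(x in D) ((Gr vth x)%:E + (C * delta th vth * E)%:E
                           + (C * delta th vth)%:E * (Gr 0 x)%:E))%E).
    apply: ge0_le_integral => //.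
    - by move=> x _; rewrite lee_fin.
    - by apply/measurable_realfun.measurable_EFinP; exact: mG.
    - apply: emeasurable_funD.
        apply: emeasurable_funD; first by apply/measurable_realfun.measurable_EFinP; exact: mG.
        exact: measurable_cst.
      apply: emeasurable_funM; first exact: measurable_cst.
      by apply/measurable_realfun.measurable_EFinP; exact: mG.
    - move=> x Dx; rewrite -EFinM -!EFinD lee_fin; exact: key.
  rewrite (ge0_integralD mu mD (f1 := fun x => ((Gr vth x)%:E + (C * delta th vth * E)%:E)%E)
             (f2 := fun x => ((C * delta th vth)%:E * (Gr 0 x)%:E)%E)).
  - rewrite (ge0_integralD mu mD (f1 := fun x => (Gr vth x)%:E)
             (f2 := fun x => (C * delta th vth * E)%:E)).
    + rewrite integral_cst // ge0_integralZl //.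
      * rewrite !IE mE -!EFinM -!EFinD lee_fin; rewrite le_eqVlt; apply/orP; left; apply/eqP; ring.
      * by apply/measurable_realfun.measurable_EFinP; exact: mG.
      * by move=> x _; rewrite lee_fin.
    + by move=> x _; rewrite lee_fin.
    + by apply/measurable_realfun.measurable_EFinP; exact: mG.
    + by move=> x _; rewrite lee_fin mulr_ge0.
    + exact: measurable_cst.
  - by move=> x _; rewrite -EFinD lee_fin addr_ge0 // mulr_ge0.
  - apply: emeasurable_funD; first by apply/measurable_realfun.measurable_EFinP; exact: mG.
    exact: measurable_cst.
  - by move=> x _; rewrite -EFinM lee_fin mulr_ge0.
  - apply: emeasurable_funM; first exact: measurable_cst.
    by apply/measurable_realfun.measurable_EFinP; exact: mG.
exists (C * (E * m + I 0) + (l L)%:R * C).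
move=> th vth Kth Kvth.
rewrite mulrDl EFinD.
apply: leeD.
  rewrite lee_fin !lossE ler_norml; apply/andP; split.
    have := side vth th Kvth Kth; rewrite -delta_sym /delta.
    set q := C * _ * _; set q' := C * _ * _; have -> : q = q' by rewrite /q /q'; ring.
    move=> h; clear -h; lra.
  have := side th vth Kth Kvth; rewrite /delta.
  set q := C * _ * _; set q' := C * _ * _; have -> : q = q' by rewrite /q /q'; ring.
  move=> h; lra.
apply: ge_ereal_sup => _ [x Dx <-].
rewrite lee_fin -mulrA.
apply: euclid_le; first by rewrite mulr_ge0 // delta_ge0.
move=> i; have := HBC th vth x (fun j => HM th j Kth) (fun j => HM vth j Kvth) Dx i.
by case.
Qed.
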